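(* (Metatheory of the CPL sequent calculus.) Fix a set $W$ of worlds with a converse well-founded accessibility relation $\prec$. For all contexts $\Gamma,\Gamma'$, worlds $w$, and propositions $A, C$: (i) (Hypothesis / identity) If $A[w] \in \Gamma$, then $\Gamma \Rightarrow A[w]$. (ii) (Generalized weakening) If $\Gamma \subseteq_w \Gamma'$ and $\Gamma \Rightarrow A[w]$, then $\Gamma' \Rightarrow A[w]$. (iii) (Substitution / cut) If $\Gamma \Rightarrow A[w]$ and $\Gamma, A[w] \Rightarrow C[w]$, then $\Gamma \Rightarrow C[w]$.
   Context: Fix a set $W$ of worlds and a binary accessibility relation $\prec$ on $W$ that is converse well-founded: there is no infinite chain $w_0 \prec w_1 \prec w_2 \prec \cdots$ (in particular $\prec$ is irreflexive and acyclic). $\prec^*$ and $\prec^+$ denote the reflexive–transitive and transitive closures. Propositions: $A,B,C ::= Q \mid \bot \mid A \supset B \mid \Diamond A \mid \Box A$, $Q$ ranging over atomic propositions. A context $\Gamma$ is a finite collection of judgments $A[w]$ ($w\in W$). $\Gamma \subseteq_w \Gamma'$ holds iff (a) for all $w'$ with $w \prec^* w'$, $A[w'] \in \Gamma$ implies $A[w'] \in \Gamma'$, and (b) for all $w'$ with $w \prec^+ w'$, $A[w'] \in \Gamma'$ implies $A[w'] \in \Gamma$. The sequent $\Gamma \Rightarrow A[w]$ (sequent calculus for tethered constructive provability logic CPL) is defined one world at a time (provability at $w$ after provability at all $w'$ with $w \prec^+ w'$; well-defined by converse well-foundedness), as the least relation closed under: (init) $\Gamma, Q[w] \Rightarrow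 Q[w]$ for $Q$ atomic. ($\bot L$) If $\bot[w] \in \Gamma$ then $\Gamma \Rightarrow C[w]$. ($\supset R$) If $\Gamma, A[w] \Rightarrow B[w]$ then $\Gamma \Rightarrow A \supset B[w]$. ($\supset L$) If $A \supset B[w] \in \Gamma$, $\Gamma \Rightarrow A[w]$ and $\Gamma, B[w] \Rightarrow C[w]$, then $\Gamma \Rightarrow C[w]$. ($\Diamond R$) If $w \prec w'$ and $\Gamma \Rightarrow A[w']$ then $\Gamma \Rightarrow \Diamond A[w]$. ($\Box R$) If $\Gamma \Rightarrow A[w']$ for every $w'$ with $w \prec w'$, then $\Gamma \Rightarrow \Box A[w]$. ($\Diamond L$) If $\Diamond A[w] \in \Gamma$ and for every $w'$ with $w \prec w'$, $\Gamma \Rightarrow A[w']$ implies $\Gamma \Rightarrow C[w]$, then $\Gamma \Rightarrow C[w]$. ($\Box L$) If $\Box A[w] \in \Gamma$ and ($\Gamma \Rightarrow A[w']$ for all $w'$ with $w \prec w'$) implies $\Gamma \Rightarrow C[w]$, then $\Gamma \Rightarrow C[w]$. *)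

(* Defs.v *)
From Stdlib Require Import List Relations.
Import ListNotations.
Set Implicit Arguments.

Inductive prop (Atom : Type) : Type :=
| Atm : Atom -> prop Atom
| Bot : prop Atom
| Imp : prop Atom -> prop Atom -> prop Atom
| Dia : prop Atom -> prop Atom
| Box : prop Atom -> prop Atom.
Arguments Bot {Atom}.

(* A context is a finite collection (list) of judgments A[w]. *)
Definition ctx (Atom W : Type) := list (prop Atom * W).

Section Sequent.
Variables (Atom W : Type) (R : W -> W -> Prop).

Definition subctx (w : W) (G G' : ctx Atom W) : Prop :=
  (forall w' A, clos_refl_trans W R w w' -> In (A, w') G -> In (A, w') G') /\
  (forall w' A, clos_trans W R w w' -> In (A, w') G' -> In (A, w') G).

(* The rules at a fixed world w, given provability H at the worlds above w
   (H G A w' : "G => A[w']", only consulted for w < w'). Least relation. *)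
Inductive seq_at (H : ctx Atom W -> prop Atom -> W -> Prop) (w : W)
  : ctx Atom W -> prop Atom -> Prop :=
| s_init : forall G Q, In (Atm Q, w) G -> seq_at H w G (Atm Q)
| s_botL : forall G C, In (Bot, w) G -> seq_at H w G C
| s_impR : forall G A B, seq_at H w ((A, w) :: G) B -> seq_at H w G (Imp A B)
| s_impL : forall G A B C, In (Imp A B, w) G -> seq_at H w G A ->
    seq_at H w ((B, w) :: G) C -> seq_at H w G C
| s_diaR : forall G A w', R w w' -> H G A w' -> seq_at H w G (Dia A)
| s_boxR : forall G A, (forall w', R w w' -> H G A w') -> seq_at H w G (Box A)
| s_diaL : forall G A C, In (Dia A, w) G ->
    (forall w', R w w' -> H G A w' -> seq_at H w G C) -> seq_at H w G C
| s_boxL : forall G A C, In (Box A, w) G ->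
    ((forall w', R w w' -> H G A w') -> seq_at H w G C) -> seq_at H w G C.

Variable Hwf : well_founded (fun x y => R y x).

Definition seq_step (w : W)
  (rec : forall w', R w w' -> ctx Atom W -> prop Atom -> Prop)
  : ctx Atom W -> prop Atom -> Prop :=
  seq_at (fun G A w' => exists h : R w w', rec w' h G A) w.

Definition seq_w : W -> ctx Atom W -> prop Atom -> Prop :=
  Fix Hwf (fun _ => ctx Atom W -> prop Atom -> Prop) seq_step.

Definition sequent (G : ctx Atom W) (A : prop Atom) (w : W) : Prop := seq_w w G A.

End Sequent.

(* Main.v *)
Require Import Defs.
From Stdlib Require Import List Relations.
From Stdlib Require Import Wellfounded FunctionalExtensionality.

Section M.
Variables (Atom W : Type) (R : W -> W -> Prop)
  (Hwf : well_founded (fun x y => R y x)).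

Definition S (w : W) (G : ctx Atom W) (A : prop Atom) := sequent R Hwf G A w.
Definition Hw (w : W) := fun (G : ctx Atom W) (A : prop Atom) (w' : W) =>
  exists _ : R w w', S w' G A.
Definition SA (w : W) := seq_at R (Hw w) w.

Lemma seq_w_eq w : seq_w (Atom:=Atom) R Hwf w = seq_step R w (fun w' (_ : R w w') => seq_w (Atom:=Atom) R Hwf w').
Proof.
  unfold seq_w at 1. rewrite Fix_eq; [reflexivity|].
  intros x f g Hfg. assert (E : f = g).
  { apply functional_extensionality_dep; intro y.
    apply functional_extensionality_dep; intro p. apply Hfg. }
  subst; reflexivity.
Qed.

Lemma unf w G A : S w G A <-> SA w G A.
Proof. unfold S, sequent, SA. rewrite seq_w_eq. unfold seq_step, Hw, S, sequent. tauto. Qed.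

Lemma flip_t x y : clos_trans W R x y -> clos_trans W (fun a b => R b a) y x.
Proof. induction 1. apply t_step; auto. eapply t_trans; eauto. Qed.

Lemma no_cycle w : clos_trans W R w w -> False.
Proof.
  intro H. apply flip_t in H.
  pose proof (wf_clos_trans _ _ Hwf w) as Hacc.
  revert H. induction Hacc as [x _ IH]. intro H. exact (IH x H H).
Qed.

Lemma t_rt x y : clos_trans W R x y -> clos_refl_trans W R x y.
Proof. induction 1. apply rt_step; auto. eapply rt_trans; eauto. Qed.

Lemma t_then_rt x y z : clos_trans W R x y -> clos_refl_trans W R y z -> clos_trans W R x z.
Proof. intros H1 H2. revert x H1. induction H2; intros; eauto using t_trans, t_step. Qed.

Lemma sub_same w (G G' : ctx Atom W) :
  (forall p, In p G -> In p G') ->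
  (forall Y x, x <> w -> In (Y, x) G' -> In (Y, x) G) -> subctx R w G G'.
Proof.
  intros H1 H2; split; intros; auto.
  apply H2; auto. intro; subst; eapply no_cycle; eauto.
Qed.

Lemma sub_up w w0 (G G' : ctx Atom W) : R w w0 ->
  (forall Y x, x <> w -> In (Y, x) G -> In (Y, x) G') ->
  (forall Y x, x <> w -> In (Y, x) G' -> In (Y, x) G) -> subctx R w0 G G'.
Proof.
  intros r H1 H2; split; intros.
  - apply H1; auto. intro; subst. apply (no_cycle w). eapply t_then_rt; [apply t_step; eauto| eauto].
  - apply H2; auto. intro; subst. apply (no_cycle w). eapply t_trans; [apply t_step; eauto| eauto].
Qed.

Lemma sub_cons w G G' (A : prop Atom) : subctx R w G G' -> subctx R w ((A, w) :: G) ((A, w) :: G').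
Proof.
  intros [H1 H2]; split; intros w' B Hr Hin; simpl in *.
  - destruct Hin; auto.
  - destruct Hin as [e|i]; auto.
Qed.

Lemma sub_rev_up w w0 (G G' : ctx Atom W) : subctx R w G G' -> R w w0 -> subctx R w0 G' G.
Proof.
  intros [H1 H2] r; split; intros.
  - apply H2; auto. eapply t_then_rt; [apply t_step; eauto| eauto].
  - apply H1; auto. apply t_rt. eapply t_trans; [apply t_step; eauto| eauto].
Qed.

Lemma weak : forall w G A, SA w G A -> forall G', subctx R w G G' -> SA w G' A.
Proof.
  intro w; induction w as [w IHw] using (well_founded_ind Hwf).
  assert (IHS : forall w', R w w' -> forall G A G', subctx R w' G G' -> S w' G A -> S w' G' A).
  { intros w' r G A G' Hs HS. apply unf. apply unf in HS. eapply IHw; eauto. }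
  intros G A D; induction D; intros G' Hs.
  - apply s_init. apply (proj1 Hs); [apply rt_refl | assumption].
  - apply s_botL. apply (proj1 Hs); [apply rt_refl | assumption].
  - apply s_impR. apply IHD. apply sub_cons; auto.
  - apply s_impL with A B; [apply (proj1 Hs); [apply rt_refl | eassumption] | apply IHD1; auto |].
    apply IHD2. apply sub_cons; auto.
  - eapply s_diaR; [eassumption|]. destruct H0 as [r s]. exists r.
    eapply IHS; eauto. destruct Hs as [Ha Hb]; split; intros.
    + apply Ha; auto. eapply rt_trans; [apply rt_step; eauto | eauto].
    + apply Hb; auto. eapply t_trans; [apply t_step; eauto | eauto].
  - apply s_boxR. intros w' r. destruct (H w' r) as [r' s]. exists r'.
    eapply IHS; eauto. destruct Hs as [Ha Hb]; split; intros.
    + apply Ha; auto. eapply rt_trans; [apply rt_step; eauto | eauto].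
    + apply Hb; auto. eapply t_trans; [apply t_step; eauto | eauto].
  - eapply s_diaL; [apply (proj1 Hs); [apply rt_refl | eassumption]|].
    intros w' r [r' h]. apply H1 with w'; auto. exists r'.
    eapply IHS; eauto. eapply sub_rev_up; eauto.
  - eapply s_boxL; [apply (proj1 Hs); [apply rt_refl | eassumption]|].
    intro hall. apply H1; auto. intros w' r. destruct (hall w' r) as [r' h]. exists r'.
    eapply IHS; eauto. eapply sub_rev_up; eauto.
Qed.

Lemma weakS w' G G' A : subctx R w' G G' -> S w' G A -> S w' G' A.
Proof. intros Hs H. apply unf. apply unf in H. eapply weak; eauto. Qed.

Lemma ident : forall A w G, In (A, w) G -> SA w G A.
Proof.
  induction A; intros w G Hin.
  - apply s_init; auto.
  - apply s_botL; auto.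
  - apply s_impR. eapply s_impL with (A := A1) (B := A2).
    + right; eauto.
    + apply IHA1; left; reflexivity.
    + apply IHA2; left; reflexivity.
  - eapply s_diaL; [eassumption|]. intros w' r h. eapply s_diaR; eauto.
  - eapply s_boxL; [eassumption|]. intro h. apply s_boxR; auto.
Qed.

Definition Cut (A : prop Atom) := forall w G C, SA w G A -> SA w ((A, w) :: G) C -> SA w G C.

Definition RF (A : prop Atom) (w : W) (G : ctx Atom W) : Prop :=
  match A with
  | Imp B1 B2 => SA w ((B1, w) :: G) B2
  | Dia B => exists w0, R w w0 /\ S w0 G B
  | Box B => forall w', R w w' -> S w' G B
  | _ => False
  end.

Lemma RF_weak A w G X : RF A w G -> RF A w ((X, w) :: G).
Proof.
  destruct A; simpl; auto; intro H.
  - eapply weak; [exact H|]. apply sub_same.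
    + simpl; intros p [e|i]; auto.
    + simpl; intros Y x n [e|[e|i]]; auto; inversion e; subst; congruence.
  - destruct H as [w0 [r s]]. exists w0; split; auto. eapply weakS; [|exact s].
    apply sub_up with w; auto; simpl; intros Y x n; [auto|].
    intros [e|i]; auto; inversion e; subst; congruence.
  - intros w' r. eapply weakS; [|exact (H w' r)].
    apply sub_up with w; auto; simpl; intros Y x n; [auto|].
    intros [e|i]; auto; inversion e; subst; congruence.
Qed.

Lemma transfer (w w' : W) (A : prop Atom) (G G0 : ctx Atom W) X :
  (forall Y, In Y G <-> (Y = (A, w) \/ In Y G0)) -> R w w' ->
  (S w' G X <-> S w' G0 X).
Proof.
  intros Heq r; split; apply weakS; apply sub_up with w; auto; intros Y x n Hi.
  - destruct (proj1 (Heq _) Hi) as [e|i]; auto. inversion e; congruence.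
  - apply Heq; auto.
  - apply Heq; auto.
  - destruct (proj1 (Heq _) Hi) as [e|i]; auto. inversion e; congruence.
Qed.

Lemma iff_cons (A X : prop Atom) (w : W) (G G0 : ctx Atom W) :
  (forall Y, In Y G <-> (Y = (A, w) \/ In Y G0)) ->
  (forall Y, In Y ((X, w) :: G) <-> (Y = (A, w) \/ In Y ((X, w) :: G0))).
Proof. intros Heq Y. simpl. rewrite Heq. tauto. Qed.

Lemma cut_right A (IHc : forall B1 B2, A = Imp B1 B2 -> Cut B1 /\ Cut B2) w :
  forall G' C, SA w G' C -> forall G, (forall Y, In Y G' <-> (Y = (A, w) \/ In Y G)) ->
  RF A w G -> SA w G C.
Proof.
  intros G' C E; induction E; intros G0 Heq Hrf.
  - destruct (proj1 (Heq _) H) as [e|i].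
    + inversion e; subst. simpl in Hrf; contradiction.
    + apply s_init; auto.
  - destruct (proj1 (Heq _) H) as [e|i].
    + inversion e; subst. simpl in Hrf; contradiction.
    + apply s_botL; auto.
  - apply s_impR. apply IHE; [apply iff_cons; auto | apply RF_weak; auto].
  - pose proof (IHE1 G0 Heq Hrf) as h1.
    pose proof (IHE2 ((B, w) :: G0) (iff_cons _ _ _ _ _ Heq) (RF_weak _ _ _ _ Hrf)) as h2.
    destruct (proj1 (Heq _) H) as [e|i].
    + inversion e; subst. destruct (IHc A0 B eq_refl) as [cA cB]. simpl in Hrf.
      apply (cB w G0 C); [ | exact h2]. apply (cA w G0 B); auto.
    + eapply s_impL; eauto.
  - eapply s_diaR; [eassumption|]. destruct H0 as [r' s]. exists r'.
    exact (proj1 (transfer _ _ _ _ _ _ Heq r') s).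
  - apply s_boxR; intros w' r. destruct (H w' r) as [r' s]. exists r'.
    exact (proj1 (transfer _ _ _ _ _ _ Heq r') s).
  - destruct (proj1 (Heq _) H) as [e|i].
    + inversion e; subst. pose proof Hrf as Hrf2; simpl in Hrf2. destruct Hrf2 as [w0 [r s]].
      apply (H1 w0 r); auto. exists r. exact (proj2 (transfer _ _ _ _ _ _ Heq r) s).
    + eapply s_diaL; [eassumption|]. intros w' r [r' h].
      apply (H1 w' r); auto. exists r'. exact (proj2 (transfer _ _ _ _ _ _ Heq r) h).
  - destruct (proj1 (Heq _) H) as [e|i].
    + inversion e; subst. simpl in Hrf.
      apply H1; auto. intros w' r. exists r. exact (proj2 (transfer _ _ _ _ _ _ Heq r) (Hrf w' r)).
    + eapply s_boxL; [eassumption|]. intro hall.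
      apply H1; auto. intros w' r. destruct (hall w' r) as [r' h]. exists r'.
      exact (proj2 (transfer _ _ _ _ _ _ Heq r) h).
Qed.

Lemma cut_left w G A (D : SA w G A) :
  (forall B1 B2, A = Imp B1 B2 -> Cut B1 /\ Cut B2) ->
  forall C, SA w ((A, w) :: G) C -> SA w G C.
Proof.
  induction D; intros IHc C0 E.
  - eapply weak; [exact E|]. apply sub_same.
    + simpl; intros p [e|i]; subst; auto.
    + simpl; auto.
  - apply s_botL; auto.
  - apply cut_right with (A := Imp A B) (G' := ((Imp A B, w) :: G)); auto. intro Y; simpl; split; intros [e|i]; auto.
  - eapply s_impL; [exact H | exact D1 |]. apply IHD2; auto.
    eapply weak; [exact E|]. apply sub_same.
    + simpl; intros p [e|i]; auto.
    + simpl; intros Y x n [e|[e|i]]; auto; inversion e; subst; congruence.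
  - apply cut_right with (A := Dia A) (G' := ((Dia A, w) :: G)); auto.
    + intro Y; simpl; split; intros [e|i]; auto.
    + simpl. exists w'. split; auto. destruct H0 as [_ s]; exact s.
  - apply cut_right with (A := Box A) (G' := ((Box A, w) :: G)); auto.
    + intro Y; simpl; split; intros [e|i]; auto.
    + simpl. intros w' r. destruct (H w' r) as [_ s]; exact s.
  - eapply s_diaL; [eassumption|]. intros w' r h; apply (H1 w' r h); auto.
  - eapply s_boxL; [eassumption|]. intro h; apply (H1 h); auto.
Qed.

Lemma cut_all : forall A, Cut A.
Proof.
  induction A; intros w G C D E; eapply cut_left; eauto; intros B1 B2 e;
    inversion e; subst; auto.
Qed.

End M.

Theorem theorem2 (Atom W : Type) (R : W -> W -> Prop)
  (Hwf : well_founded (fun x y => R y x)) :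
  (forall (G : ctx Atom W) (w : W) (A : prop Atom),
      In (A, w) G -> sequent R Hwf G A w) /\
  (forall (G G' : ctx Atom W) (w : W) (A : prop Atom),
      subctx R w G G' -> sequent R Hwf G A w -> sequent R Hwf G' A w) /\
  (forall (G : ctx Atom W) (w : W) (A C : prop Atom),
      sequent R Hwf G A w -> sequent R Hwf ((A, w) :: G) C w -> sequent R Hwf G C w).
Proof.
  split; [|split].
  - intros G w A H. apply (@unf Atom W R Hwf). apply ident; auto.
  - intros G G' w A Hs H. exact (@weakS Atom W R Hwf _ _ _ _ Hs H).
  - intros G w A C H1 H2. apply (@unf Atom W R Hwf). apply (@unf Atom W R Hwf) in H1. apply (@unf Atom W R Hwf) in H2.
    exact (@cut_all Atom W R Hwf A w G C H1 H2).
Qed.
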